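(* Let $\pi$ be a permutation-invariant probability density on $\mathbb{X}^n$ and $q$ a probability density on $\mathbb{X}$. For any $x\in\mathbb{X}^n$ and $y\in\mathbb{X}$, $$\sum_{i=1}^n\frac{w_i(y,x)}{W(y,x)}\,\alpha_i^{\mathrm{SOMA}}(y,x)\;\ge\;\sum_{i=1}^n\frac1n\,\alpha_i^{\mathrm{IMwG}}(y,x).$$
   Context: Permutation invariance: $\pi(x_{\sigma(1)},\dots,x_{\sigma(n)})=\pi(x)$ for all permutations $\sigma$. $[x_{-i},y]$ is $x$ with its $i$-th component replaced by $y$. Weights: $w_i(y,x)=\pi([x_{-i},y])/\big(q(y)\prod_{j\ne i}q(x_j)\big)$ ($1\le i\le n$), $w_0(y,x)=\pi(x)/\prod_j q(x_j)$, $W(y,x)=\sum_{i=1}^n w_i(y,x)$ (well-defined, positive). $\alpha_i^{\mathrm{SOMA}}(y,x)=\min\{1,W/(W+w_0-w_i)\}$ and $\alpha_i^{\mathrm{IMwG}}(y,x)=\min\{1,w_i(y,x)/w_0(y,x)\}$. *)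

(* Defs.v *)
From HB Require Import structures.
From mathcomp Require Import all_boot all_order all_algebra all_fingroup.
Set Implicit Arguments. Unset Strict Implicit. Unset Printing Implicit Defensive.
Import Order.TTheory GRing.Theory Num.Theory.
Local Open Scope ring_scope.

Section Weights.
Variables (R : realFieldType) (X : Type) (n : nat).
Variables (pi : ('I_n -> X) -> R) (q : X -> R).

Definition perm_invariant : Prop :=
  forall (s : 'S_n) (x : 'I_n -> X), pi (fun k => x (s k)) = pi x.

Definition repl (x : 'I_n -> X) (i : 'I_n) (y : X) : 'I_n -> X :=
  fun j => if j == i then y else x j.

Definition w_i (i : 'I_n) (y : X) (x : 'I_n -> X) : R :=
  pi (repl x i y) / (q y * \prod_(j < n | j != i) q (x j)).

Definition w_0 (y : X) (x : 'I_n -> X) : R :=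
  pi x / \prod_(j < n) q (x j).

Definition W (y : X) (x : 'I_n -> X) : R := \sum_(i < n) w_i i y x.

Definition alpha_SOMA (i : 'I_n) (y : X) (x : 'I_n -> X) : R :=
  Num.min 1 (W y x / (W y x + w_0 y x - w_i i y x)).

Definition alpha_IMwG (i : 'I_n) (y : X) (x : 'I_n -> X) : R :=
  Num.min 1 (w_i i y x / w_0 y x).
End Weights.

(* Main.v *)
Require Import Defs.
From HB Require Import structures.
From mathcomp Require Import all_boot all_order all_algebra all_fingroup.
From mathcomp Require Import ring lra.
Import Order.TTheory GRing.Theory Num.Theory.
Set Implicit Arguments. Unset Strict Implicit.
Local Open Scope ring_scope.

Lemma minmax_sum (R : realFieldType) (u v : R) : Num.min u v + Num.max u v = u + v.
Proof. by case: (leP u v) => _ /=; rewrite // addrC. Qed.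

Lemma core (R : realFieldType) (n : nat) (a : 'I_n -> R) (b : R)
  (ha : forall i, 0 < a i) (hb : 0 < b) :
  \sum_(i < n) n%:R^-1 * Num.min 1 (a i / b) <=
  \sum_(i < n) (a i / \sum_(j < n) a j) *
     Num.min 1 ((\sum_(j < n) a j) / ((\sum_(j < n) a j) + b - a i)).
Proof.
case: n a ha => [|n] a ha; first by rewrite !big_ord0.
set S := \sum_(j < n.+1) a j.
set M := \sum_(j < n.+1) Num.max (a j) b.
set C := \sum_(j < n.+1) Num.min (a j) b.
have Sge i : a i <= S.
  by rewrite /S (bigD1 i) //= lerDl sumr_ge0 // => j _; apply/ltW.
have Spos : 0 < S by apply: lt_le_trans (ha ord0) (Sge ord0).
have SM : S <= M by apply: ler_sum => j _; rewrite le_max lexx.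
have Mpos : 0 < M by apply: lt_le_trans SM.
have key i : S + b - a i <= M.
  rewrite /S /M (bigD1 i) //= (bigD1 i (P := predT)) //=.
  have : \sum_(j < n.+1 | j != i) a j <= \sum_(j < n.+1 | j != i) Num.max (a j) b.
    by apply: ler_sum => j _; rewrite le_max lexx.
  have : b <= Num.max (a i) b by rewrite le_max lexx orbT.
  lra.
have nbpos : 0 < n.+1%:R * b by rewrite mulr_gt0 // ltr0n.
have step1 : \sum_(i < n.+1) a i / M <= \sum_(i < n.+1) (a i / S) *
     Num.min 1 (S / (S + b - a i)).
  apply: ler_sum => i _.
  have hm : S / M <= Num.min 1 (S / (S + b - a i)).
    rewrite le_min; apply/andP; split.
      by rewrite ler_pdivrMr // mul1r.
    have hd : 0 < S + b - a i by have := Sge i; lra.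
    by rewrite ler_pdivrMr // mulrAC ler_pdivlMr // ler_pM2l.
  apply: le_trans (ler_wpM2l _ hm); last by rewrite divr_ge0 // ltW.
  by rewrite mulrA divfK ?gt_eqF.
have step2 : \sum_(i < n.+1) n.+1%:R^-1 * Num.min 1 (a i / b) <=
    \sum_(i < n.+1) Num.min (a i) b / (n.+1%:R * b).
  apply: ler_sum => i _.
  rewrite invfM mulrCA; apply: ler_wpM2l; first by rewrite invr_ge0 ler0n.
  case: (leP (a i) b) => h; first by rewrite ge_min lexx orbT.
  by rewrite mulfV ?gt_eqF // ge_min lexx.
rewrite -/S; apply: le_trans step2 _.
apply: le_trans _ step1.
rewrite -mulr_suml -/S -mulr_suml -/C.
have hCS : C <= S by apply: ler_sum => j _; rewrite ge_min lexx.
have hnb : n.+1%:R * b = \sum_(j < n.+1) b by rewrite sumr_const card_ord mulr_natl.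
have hCn : C <= n.+1%:R * b.
  rewrite hnb; by apply: ler_sum => j _; rewrite ge_min lexx orbT.
have hsum : C + M = S + n.+1%:R * b.
  rewrite /C /M /S -big_split /= hnb.
  by rewrite -big_split /=; apply: eq_bigr => j _; rewrite minmax_sum.
rewrite ler_pdivrMr // mulrAC ler_pdivlMr //.
have : 0 <= (n.+1%:R * b - C) * (S - C) by rewrite mulr_ge0 // subr_ge0.
have -> : M = S + n.+1%:R * b - C by lra.
rewrite -/S; set N := n.+1%:R * b => h.
rewrite -subr_ge0; suff -> : S * N - C * (S + N - C) = (N - C) * (S - C) by [].
ring.
Qed.

Theorem lemma3 (R : realFieldType) (X : Type) (n : nat)
  (pi : ('I_n -> X) -> R) (q : X -> R)
  (pi_pos : forall z : 'I_n -> X, 0 < pi z)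
  (q_pos : forall u : X, 0 < q u)
  (pi_sym : perm_invariant pi)
  (x : 'I_n -> X) (y : X) :
  \sum_(i < n) (w_i pi q i y x / W pi q y x) * alpha_SOMA pi q i y x
  >= \sum_(i < n) n%:R^-1 * alpha_IMwG pi q i y x.
Proof.
have ha : forall i, 0 < w_i pi q i y x.
  move=> i; rewrite /w_i divr_gt0 // mulr_gt0 //.
  by apply: prodr_gt0 => j _.
have hb : 0 < w_0 pi q y x.
  rewrite /w_0 divr_gt0 //; by apply: prodr_gt0 => j _.
exact: (@core R n (fun i => w_i pi q i y x) (w_0 pi q y x) ha hb).
Qed.
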